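(* Let $k$ be a field, $G$ an ordered abelian group, $K=k((G))$ with canonical valuation $v$, and $D$ a derivation on $K$ whose field of constants is $k$, such that $v$ is a differential valuation with respect to $D$. Let $S\subseteq K$ be the additive subgroup of power series without constant term (i.e. $c_0=0$). If $(K,D)$ admits asymptotic integration, then for every $b\in K$ there is a unique $s\in S$ with $Ds=b$; that is, $D|_S:S\to K$ is a bijective additive map.
   Context: For a field $k$ and ordered abelian group $G$, $k((G))$ is the field of formal sums $a=\sum_{g\in G}c_gt^g$ with $c_g\in k$ and well-ordered support $\mathrm{supp}(a)=\{g\mid c_g\neq0\}$; its canonical valuation is $va=\min\mathrm{supp}(a)$, $v0=\infty$. A derivation $D$ on a field $K$ is an additive map with $D(ab)=aDb+bDa$; its field of constants is $C=\{a\in K\mid Da=0\}$. A valuation $v$ of $K$ is a differential valuation (for $D$) if $v$ is trivial on $C$ and for all $a,b\in K$ with $va\ge0$, $vb>0$, $b\ne0$ one has $v\!\left(\frac{b\,Da}{Db}\right)>0$. $(K,D)$ admits asymptotic integration if for every $b\in K\setminus\{0\}$ there is $a\in K$ with $v(b-Da)>vb$. *)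

(* Defs.v *)
From HB Require Import structures.
From mathcomp Require Import all_boot all_order all_algebra.
From mathcomp Require Import boolp classical_sets fsbigop.
Set Implicit Arguments. Unset Strict Implicit. Unset Printing Implicit Defensive.
Import Order.TTheory GRing.Theory Num.Theory.
Local Open Scope classical_set_scope.
Local Open Scope ring_scope.

Record ordered_abelian_group (G : zmodType) (le : rel G) : Prop := {
  oag_refl : forall x, le x x;
  oag_antisym : forall x y, le x y -> le y x -> x = y;
  oag_trans : forall x y z, le x y -> le y z -> le x z;
  oag_total : forall x y, le x y \/ le y x;
  oag_add : forall x y z, le x y -> le (x + z) (y + z)
}.

Section Hahn.
Variables (k : fieldType) (G : zmodType) (le : rel G).

Definition glt (x y : G) : Prop := le x y /\ x <> y.

Definition supp (a : G -> k) : set G := [set g | a g <> 0].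

Definition well_ordered (A : set G) : Prop :=
  forall B, B `<=` A -> B !=set0 -> exists2 m, B m & forall x, B x -> le m x.

(* elements of k((G)) *)
Definition hahn (a : G -> k) : Prop := well_ordered (supp a).

Definition hzero : G -> k := fun _ => 0.
Definition hadd (a b : G -> k) : G -> k := fun g => a g + b g.
Definition hopp (a : G -> k) : G -> k := fun g => - a g.
(* Cauchy product: (ab)_g = sum_{h+h'=g} a_h b_h' (a finite sum for
   Hahn series) *)
Definition hmul (a b : G -> k) : G -> k :=
  fun g => \sum_(h \in supp a) (a h * b (g - h)).
Definition hconst (c : k) : G -> k := fun g => if g == 0 then c else 0.

(* canonical valuation: [is_val a g] means a <> 0 and v a = g *)
Definition is_val (a : G -> k) (g : G) : Prop :=
  a g <> 0 /\ forall h, a h <> 0 -> le g h.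
(* v a > g (true in particular when a = 0, v 0 = oo) *)
Definition val_gt (a : G -> k) (g : G) : Prop := forall h, a h <> 0 -> glt g h.
Definition val_ge (a : G -> k) (g : G) : Prop := forall h, a h <> 0 -> le g h.

Definition derivation (D : (G -> k) -> (G -> k)) : Prop :=
  (forall a, hahn a -> hahn (D a)) /\
  (forall a b, hahn a -> hahn b -> D (hadd a b) = hadd (D a) (D b)) /\
  (forall a b, hahn a -> hahn b ->
     D (hmul a b) = hadd (hmul a (D b)) (hmul b (D a))).

Definition constants_are_k (D : (G -> k) -> (G -> k)) : Prop :=
  forall a, hahn a -> (D a = hzero <-> exists c : k, a = hconst c).

(* v is a differential valuation for D:
   v trivial on the constants, and for va >= 0, vb > 0, b <> 0:
   v(b Da / Db) > 0, i.e. v(b Da) > v(Db). *)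
Definition differential_valuation (D : (G -> k) -> (G -> k)) : Prop :=
  (forall a, hahn a -> D a = hzero -> a <> hzero -> is_val a 0) /\
  (forall a b, hahn a -> hahn b -> val_ge a 0 -> val_gt b 0 -> b <> hzero ->
     forall g, is_val (D b) g -> val_gt (hmul b (D a)) g).

Definition asymptotic_integration (D : (G -> k) -> (G -> k)) : Prop :=
  forall b, hahn b -> b <> hzero ->
    exists2 a, hahn a & forall g, is_val b g -> val_gt (hadd b (hopp (D a))) g.

Definition no_const_term (s : G -> k) : Prop := hahn s /\ s 0 = 0.

End Hahn.

(* Main.v *)
Require Import Defs.
From mathcomp Require Import all_boot all_order all_algebra.
From mathcomp Require Import boolp classical_sets fsbigop.
From mathcomp Require Import ring.
Set Implicit Arguments. Unset Strict Implicit. Unset Printing Implicit Defensive.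
Import Order.TTheory GRing.Theory Num.Theory.
Local Open Scope classical_set_scope.
Local Open Scope ring_scope.

Section Ord.
Variables (G : zmodType) (le : rel G) (HG : ordered_abelian_group le).
Notation lt := (glt le).

Lemma le_refl x : le x x. Proof. exact: (oag_refl HG). Qed.
Lemma le_trans x y z : le x y -> le y z -> le x z. Proof. exact: (oag_trans HG). Qed.
Lemma le_anti x y : le x y -> le y x -> x = y. Proof. exact: (oag_antisym HG). Qed.
Lemma le_total x y : le x y \/ le y x. Proof. exact: (oag_total HG). Qed.
Lemma le_addr x y z : le x y -> le (x + z) (y + z). Proof. exact: (oag_add HG). Qed.
Lemma le_addl x y z : le x y -> le (z + x) (z + y).
Proof. by rewrite ![z + _]addrC; apply: le_addr. Qed.
Lemma le_addr_iff x y z : le (x + z) (y + z) <-> le x y.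
Proof. split; last exact: le_addr. move=> /(le_addr (-z)); by rewrite !addrK. Qed.
Lemma lt_irr x : ~ lt x x. Proof. by case. Qed.
Lemma lt_le x y : lt x y -> le x y. Proof. by case. Qed.
Lemma lt_le_trans x y z : lt x y -> le y z -> lt x z.
Proof. move=> [xy nxy] yz; split; first exact: le_trans xy yz.
by move=> E; subst; apply: nxy; apply: le_anti. Qed.
Lemma le_lt_trans x y z : le x y -> lt y z -> lt x z.
Proof. move=> xy [yz nyz]; split; first exact: le_trans xy yz.
by move=> E; subst; apply: nyz; apply: le_anti. Qed.
Lemma lt_trans x y z : lt x y -> lt y z -> lt x z.
Proof. by move=> xy /lt_le; apply: lt_le_trans. Qed.
Lemma not_le x y : ~ le x y -> lt y x.
Proof. move=> nxy; case: (le_total x y) => // yx; split => // E; subst.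
by apply: nxy; apply: le_refl. Qed.
Lemma lt_not_le x y : lt x y -> ~ le y x.
Proof. by move=> [xy nxy] yx; apply: nxy; apply: le_anti. Qed.
Lemma lt_addr_iff x y z : lt (x + z) (y + z) <-> lt x y.
Proof. split => -[H1 H2]; split.
- exact: (proj1 (le_addr_iff _ _ _) H1).
- by move=> E; subst.
- exact: le_addr.
- by move=> /addIr. Qed.
Lemma lt_addl_iff x y z : lt (z + x) (z + y) <-> lt x y.
Proof. by rewrite ![z + _]addrC lt_addr_iff. Qed.
Lemma lt_sub0 x y : lt x y <-> lt 0 (y - x).
Proof. by rewrite -(lt_addr_iff x y (-x)) subrr. Qed.
Lemma lt_neq x y : lt x y -> x <> y. Proof. by case. Qed.
End Ord.
Section Hahn.
Variables (k : fieldType) (G : zmodType) (le : rel G) (HG : ordered_abelian_group le).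
Notation lt := (glt le).
Notation hahn := (hahn le).
Implicit Types (a b f : G -> k).

Definition mono (g : G) : G -> k := fun x => if x == g then 1 else 0.
Definition shift (f : G -> k) (d : G) : G -> k := fun y => f (y - d).

Lemma wo_sub (A B : set G) : A `<=` B -> well_ordered le B -> well_ordered le A.
Proof. by move=> AB wB C CA; apply: wB; apply: subset_trans AB. Qed.

Lemma wo_U (A B : set G) : well_ordered le A -> well_ordered le B -> well_ordered le (A `|` B).
Proof.
move=> wA wB C CAB [c Cc].
have [[x Cx Ax]|nA] := pselect (exists2 x, C x & A x).
- have [m1 [Cm1 Am1] Hm1] := wA (C `&` A) (fun x => @proj2 _ _) (ex_intro _ x (conj Cx Ax)).
  have [[y Cy By]|nB] := pselect (exists2 y, C y & B y).
  + have [m2 [Cm2 Bm2] Hm2] := wB (C `&` B) (fun x => @proj2 _ _) (ex_intro _ y (conj Cy By)).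
    case: (le_total HG m1 m2) => H.
    * exists m1 => // z Cz; case: (CAB _ Cz) => Hz; first exact: Hm1.
      by apply: (le_trans HG H); apply: Hm2.
    * exists m2 => // z Cz; case: (CAB _ Cz) => Hz; last exact: Hm2.
      by apply: (le_trans HG H); apply: Hm1.
  + exists m1 => // z Cz; case: (CAB _ Cz) => Hz; first exact: Hm1.
    by exfalso; apply: nB; exists z.
- have [m2 [Cm2 Bm2] Hm2] := wB (C `&` B) (fun x => @proj2 _ _) (ex_intro _ c (conj Cc (match CAB _ Cc with or_introl h => ltac:(exfalso; apply: nA; exists c => //) | or_intror h => h end))).
  exists m2 => // z Cz; case: (CAB _ Cz) => Hz; last exact: Hm2.
  by exfalso; apply: nA; exists z.
Qed.

Lemma hahn_add a b : hahn a -> hahn b -> hahn (hadd a b).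
Proof.
move=> ha hb; apply: (wo_sub (B := supp a `|` supp b)); last exact: wo_U.
move=> x; rewrite /supp /hadd /setU /mkset /= => H.
have [ax|n] := eqVneq (a x) 0; last by left; apply/eqP.
by right => E; apply: H; rewrite ax E addr0.
Qed.

Lemma hahn_opp a : hahn a -> hahn (hopp a).
Proof.
by apply: wo_sub => x; rewrite /supp /hopp /= => H E; apply: H; rewrite E oppr0.
Qed.

Lemma hahn_hzero : hahn (@hzero k G).
Proof. by move=> B; rewrite /supp /hzero => BA [x /BA]. Qed.

Lemma wo_single (g : G) : well_ordered le [set g].
Proof. move=> B Bg [x Bx]; exists x => // y By.
by rewrite (Bg _ Bx) (Bg _ By); apply: le_refl. Qed.

Lemma hahn_hconst (c : k) : hahn (hconst c).
Proof.
apply: (wo_sub (B := [set 0])); last exact: wo_single.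
by move=> x; rewrite /supp /hconst /=; case: eqP.
Qed.

Lemma hahn_mono g : hahn (@mono g).
Proof.
apply: (wo_sub (B := [set g])); last exact: wo_single.
by move=> x; rewrite /supp /mono /=; case: eqP.
Qed.

Lemma hahn_shift a d : hahn a -> hahn (shift a d).
Proof.
move=> ha B Bs [x Bx].
have H1 : [set y - d | y in B] `<=` supp a.
  by move=> z [y By <-]; apply: Bs.
have H2 : [set y - d | y in B] !=set0 by exists (x - d); exists x.
have [m0 [y By Ey] Hm] := ha _ H1 H2.
exists y => // z Bz.
have : le m0 (z - d) by apply: Hm; exists z.
by rewrite -Ey; move/(le_addr HG d); rewrite !subrK.
Qed.

Lemma exists_val a : hahn a -> a <> @hzero k G -> exists g, is_val le a g.
Proof.
move=> ha na.
have [x ax] : exists x, a x <> 0.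
  apply: contrapT => H; apply: na; apply: funext => x; rewrite /hzero.
  by apply: contrapT => ax; apply: H; exists x.
have [m0 am Hm] := ha (supp a) (fun _ h => h) (ex_intro _ x ax).
by exists m0; split.
Qed.

Lemma is_val_uniq a g h : is_val le a g -> is_val le a h -> g = h.
Proof. by move=> [ag Hg] [ah Hh]; apply: (le_anti HG); [apply: Hg | apply: Hh]. Qed.

Lemma hmul_mono g f : hmul (mono g) f = shift f g.
Proof.
apply: funext => y; rewrite /hmul.
rewrite -(fsbig_widen [set g] (supp (mono g))).
- by rewrite fsbig_set1 /mono eqxx mul1r.
- by move=> x ->; rewrite /supp /mono /= eqxx; apply/eqP; apply: oner_neq0.
- by move=> x []; rewrite /supp /mono /=; case: eqP.
Qed.

Lemma hmul_supp a b y : hmul a b y <> 0 -> exists h, a h <> 0 /\ b (y - h) <> 0.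
Proof.
move=> H; apply: contrapT => nH; apply: H; rewrite /hmul; apply: fsbig1 => h ah.
have [bh|bh] := eqVneq (b (y - h)) 0; first by rewrite bh mulr0.
by exfalso; apply: nH; exists h; split => //; apply/eqP.
Qed.

Lemma hmul_single a b y h0 : a h0 <> 0 ->
  (forall h, a h <> 0 -> h <> h0 -> b (y - h) = 0) -> hmul a b y = a h0 * b (y - h0).
Proof.
move=> a0 Hh; rewrite /hmul -(fsbig_widen [set h0] (supp a)).
- by rewrite fsbig_set1.
- by move=> x ->.
- by move=> x [ax nx]; rewrite /= (Hh x ax nx) mulr0.
Qed.

End Hahn.
Section Deriv.
Variables (k : fieldType) (G : zmodType) (le : rel G) (HG : ordered_abelian_group le).
Variable D : (G -> k) -> (G -> k).
Hypotheses (Hder : derivation le D) (Hcst : constants_are_k le D)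
  (Hdv : differential_valuation le D).
Notation lt := (glt le).
Notation hahn := (hahn le).
Notation z0 := (@hzero k G).
Implicit Types (a b f A B x w : G -> k).

Lemma hz_const : z0 = hconst 0.
Proof. by apply: funext => y; rewrite /hzero /hconst; case: eqP. Qed.

Lemma Dconst (c : k) : D (hconst c) = z0.
Proof.
have hc : hahn (hconst c) by apply: hahn_hconst.
by apply: (proj2 (Hcst hc)); exists c.
Qed.

Lemma D0 : D z0 = z0.
Proof. by rewrite {1}hz_const Dconst. Qed.

Lemma Dadd a b : hahn a -> hahn b -> D (hadd a b) = hadd (D a) (D b).
Proof. by case: Hder => _ [H _]; apply: H. Qed.

Lemma Dleib a b : hahn a -> hahn b -> D (hmul a b) = hadd (hmul a (D b)) (hmul b (D a)).
Proof. by case: Hder => _ [_ H]; apply: H. Qed.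

Lemma Dhahn a : hahn a -> hahn (D a).
Proof. by case: Hder => H _; apply: H. Qed.

Lemma Dopp a : hahn a -> D (hopp a) = hopp (D a).
Proof.
move=> ha.
have E : hadd a (hopp a) = z0 by apply: funext => y; rewrite /hadd /hopp subrr.
have := Dadd ha (hahn_opp ha); rewrite E D0 => E2.
apply: funext => y; have := congr1 (fun F => F y) E2; rewrite /hadd /hopp /hzero.
by move=> H; apply/eqP; rewrite -addr_eq0 addrC -H.
Qed.

Lemma Dsub a b : hahn a -> hahn b -> D (hadd a (hopp b)) = hadd (D a) (hopp (D b)).
Proof. by move=> ha hb; rewrite Dadd ?Dopp //; apply: hahn_opp. Qed.

Lemma vgt_add A B q : val_gt le A q -> val_gt le B q -> val_gt le (hadd A B) q.
Proof.
move=> HA HB y; rewrite /hadd => H.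
have [a0|a0] := eqVneq (A y) 0; last by apply: HA; apply/eqP.
by apply: HB => b0; apply: H; rewrite a0 b0 addr0.
Qed.

Lemma vgt_opp A q : val_gt le A q -> val_gt le (hopp A) q.
Proof. by move=> HA y; rewrite /hopp => H; apply: HA => E; apply: H; rewrite E oppr0. Qed.

Lemma vgt_le A q q' : le q q' -> val_gt le A q' -> val_gt le A q.
Proof. by move=> qq HA y /HA; apply: le_lt_trans. Qed.

Lemma vgt_shift f q d : val_gt le f (q - d) -> val_gt le (shift f d) q.
Proof. by move=> Hf y /Hf; rewrite /shift -(lt_addr_iff HG _ _ d) !subrK. Qed.

Lemma vge_of_val f p : is_val le f p -> val_ge le f p.
Proof. by case. Qed.

Lemma vgt_z0 q : val_gt le z0 q.
Proof. by move=> y; rewrite /hzero. Qed.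

Lemma isval_add A B p : is_val le B p -> val_gt le A p -> is_val le (hadd A B) p.
Proof.
move=> [Bp HB] HA; split.
  rewrite /hadd; have [a0|a0] := eqVneq (A p) 0; first by rewrite a0 add0r.
  have a0' : A p <> 0 by apply/eqP.
  by exfalso; have /lt_irr := HA p a0'.
move=> y; rewrite /hadd => H.
have [a0|a0] := eqVneq (A y) 0; last by apply: lt_le; apply: HA; apply/eqP.
by apply: HB => b0; apply: H; rewrite a0 b0 addr0.
Qed.

Lemma isval_opp A p : is_val le A p -> is_val le (hopp A) p.
Proof.
move=> [Ap HA]; split; first by rewrite /hopp => /eqP; rewrite oppr_eq0 => /eqP.
by move=> y; rewrite /hopp => H; apply: HA => E; apply: H; rewrite E oppr0.
Qed.

Lemma isval_shift f p d : is_val le f p -> is_val le (shift f d) (p + d).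
Proof.
move=> [fp Hf]; split; first by rewrite /shift addrK.
by move=> y /Hf; rewrite /shift -(le_addr_iff HG _ _ d) subrK.
Qed.

Notation mo := (@mono k G).
Let hmo g : hahn (mo g) := @hahn_mono k G le HG g.
Arguments hmo g : clear implicits.
Lemma vgt0_mono g : lt 0 g -> val_ge le (mo g) 0.
Proof. by move=> g0 y; rewrite /mono; case: eqP => [->|] // _; case: g0. Qed.

Lemma mono_neq0 g : mo g <> z0.
Proof.
move=> /(congr1 (fun F => F g)); rewrite /mono /hzero eqxx => /eqP.
by rewrite oner_eq0.
Qed.

Lemma factA a h p : hahn a -> val_ge le a 0 -> lt 0 h ->
  is_val le (D (mo h)) p -> val_gt le (D a) (p - h).
Proof.
move=> ha a0 h0 Hp.
case: Hdv => _ H2.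
have := H2 a (mo h) ha (hmo h) a0.
have mgt : val_gt le (mo h) 0 by move=> y; rewrite /mono; case: eqP => [->|] // _.
move=> /(_ mgt (@mono_neq0 h) p Hp); rewrite hmul_mono => H.
move=> y Hy; have : shift (D a) h (y + h) <> 0 by rewrite /shift addrK.
move/H; by rewrite -(lt_addr_iff HG (p - h) y h) subrK.
Qed.

Lemma mono0 : mo 0 = hconst 1.
Proof. by apply: funext => y; rewrite /mono /hconst. Qed.

Lemma mono_mul g h : hmul (mo g) (mo h) = mo (g + h).
Proof.
rewrite hmul_mono; apply: funext => y; rewrite /shift /mono.
by rewrite subr_eq addrC.
Qed.

Lemma leib_mono g h : D (mo (g + h)) =
  hadd (shift (D (mo h)) g) (shift (D (mo g)) h).
Proof.
by rewrite -mono_mul Dleib ?hahn_mono // !hmul_mono.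
Qed.

Lemma Dmono_neq0 g : g != 0 -> D (mo g) <> z0.
Proof.
move=> g0 /(Hcst (hmo g)) [c Ec].
have := congr1 (fun F => F g) Ec; rewrite /mono /hconst eqxx (negbTE g0) => /eqP.
by rewrite oner_eq0.
Qed.

Lemma psi_ex g : g != 0 -> exists p, is_val le (D (mo g)) p.
Proof.
move=> g0; apply: exists_val; first by apply: Dhahn; apply: hahn_mono.
exact: Dmono_neq0.
Qed.

Lemma psi_neg g q : is_val le (D (mo (- g))) q ->
  is_val le (D (mo g)) (q + (g + g)).
Proof.
move=> Hq.
have E : D (mo g) = hopp (shift (D (mo (- g))) (g + g)).
  have := leib_mono g (- g); rewrite subrr mono0 Dconst => E.
  apply: funext => z; have := congr1 (fun F => F (z - g)) E.
  rewrite /hadd /shift /hzero /hopp => /eqP; rewrite eq_sym addr_eq0 => /eqP H.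
  by rewrite opprD addrA H opprK opprK subrK.
by rewrite E; apply: isval_opp; apply: isval_shift.
Qed.

Lemma neq0_cases g : g != 0 -> lt 0 g \/ lt g 0.
Proof.
move=> /eqP g0; case: (le_total HG 0 g) => H; [left|right]; split => //.
by move=> E; apply: g0.
Qed.
Lemma vgt_of_val f p q : is_val le f p -> lt q p -> val_gt le f q.
Proof. by move=> [_ Hf] qp y /Hf; apply: lt_le_trans. Qed.

Lemma lt_subpos p e : lt 0 e -> lt (p - e) p.
Proof. by move=> e0; apply/(lt_sub0 HG); rewrite opprB addrC subrK. Qed.

Lemma pos_sub g h : lt g h -> lt 0 (h - g).
Proof. by move/(lt_sub0 HG). Qed.

Lemma neg_opp g : lt g 0 -> lt 0 (- g).
Proof. by move/(lt_sub0 HG); rewrite sub0r. Qed.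

Lemma psi_neg_eq g p q : is_val le (D (mo g)) p -> is_val le (D (mo (- g))) q ->
  p = q + (g + g).
Proof. move=> Hp /psi_neg Hq; exact (is_val_uniq HG Hp Hq). Qed.

Lemma MON g h p : g != 0 -> h != 0 -> lt g h -> is_val le (D (mo g)) p ->
  val_gt le (D (mo h)) p.
Proof.
move=> g0 h0 gh Hp.
have Hgm e : lt 0 e -> val_gt le (D (mo g)) (p - e).
  by move=> e0; apply: vgt_of_val Hp _; apply: lt_subpos.
have e0 := pos_sub gh.
have [q Hq] : exists q, is_val le (D (mo (- g))) q by apply: psi_ex; rewrite oppr_eq0.
case: (neq0_cases g0) => Hg; case: (neq0_cases h0) => Hh.
- rewrite (_ : h = g + (h - g)); last by rewrite addrC subrK.
  rewrite leib_mono; apply: vgt_add; apply: vgt_shift; last exact: Hgm.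
  exact (factA (hmo _) (vgt0_mono e0) Hg Hp).
- by exfalso; apply: (lt_irr (le := le) (x := g)); exact (lt_trans HG gh (lt_trans HG Hh Hg)).
- have Ep := psi_neg_eq Hp Hq.
  have := factA (hmo h) (vgt0_mono Hh) (neg_opp Hg) Hq.
  apply: vgt_le; rewrite Ep opprK; apply (le_addl HG).
  by have := le_addr HG g (lt_le Hg); rewrite add0r.
- have Ep := psi_neg_eq Hp Hq.
  rewrite (_ : h = (h - g) + g); last by rewrite subrK.
  rewrite leib_mono; apply: vgt_add; apply: vgt_shift; first exact: Hgm.
  have := factA (hmo (h - g)) (vgt0_mono e0) (neg_opp Hg) Hq.
  by rewrite Ep opprK addrA addrK.
Qed.
Lemma le_sub_self p h : le p (p - h) -> le h 0.
Proof.
move=> H; have := le_addr HG (h - p) H.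
by rewrite [p + _]addrC subrK -opprB addNr.
Qed.

Lemma GEN x g p : hahn x -> is_val le x g -> g != 0 -> is_val le (D (mo g)) p ->
  is_val le (D x) p.
Proof.
move=> hx [xg Hx] g0 Hp.
pose c := x g.
pose w' := shift x (- g).
pose w := hadd w' (hopp (hconst c)).
have hw' : hahn w' by exact (hahn_shift HG hx).
have hw : hahn w by exact (hahn_add HG hw' (hahn_opp (hahn_hconst HG (c := c)))).
have Ex : x = hmul (mo g) w'.
  by rewrite hmul_mono; apply: funext => y; rewrite /w' /shift opprK subrK.
have Ew : D w' = D w.
  have -> : w' = hadd w (hconst c) by apply: funext => y; rewrite /w /hadd /hopp subrK.
  rewrite Dadd //; last by apply: (hahn_hconst HG).
  by rewrite Dconst; apply: funext => y; rewrite /hadd /hzero addr0.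
have w'pos : forall h, w' h <> 0 -> le 0 h.
  move=> h; rewrite /w' /shift opprK => /Hx.
  by rewrite -(le_addr_iff HG 0 h g) add0r.
rewrite Ex Dleib ?hmo // hmul_mono Ew.
apply: isval_add.
- case: Hp => Dp HDp; split.
  + have w0 : w' 0 <> 0 by rewrite /w' /shift sub0r opprK.
    rewrite (hmul_single (h0 := 0)) //.
      by rewrite subr0; apply/eqP; rewrite mulf_neq0 //; apply/eqP.
    move=> h wh h0; apply: contrapT => Dh; apply: h0.
    apply: (le_anti HG); last exact: w'pos.
    by apply: (le_sub_self (p := p)); apply: HDp.
  + move=> y /hmul_supp [h [wh Dh]].
    have h0 := w'pos _ wh.
    have := HDp _ Dh => /(le_addr HG h); rewrite subrK => H.
    apply: (le_trans HG _ H).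
    by have := le_addl HG p h0; rewrite addr0.
- apply: vgt_shift.
  have wge : val_ge le w 0.
    move=> y; rewrite /w /hadd /hopp /hconst; case: eqP => [->|_].
      by move=> _; apply: (le_refl HG).
    by rewrite oppr0 addr0 => /w'pos.
  case: (neq0_cases g0) => Hg.
  + exact (factA hw wge Hg Hp).
  + have [q Hq] : exists q, is_val le (D (mo (- g))) q by apply: psi_ex; rewrite oppr_eq0.
    have Ep := psi_neg_eq Hp Hq.
    have := factA hw wge (neg_opp Hg) Hq.
    by rewrite Ep opprK addrA addrK.
Qed.
Lemma psi_le g h pg ph : g != 0 -> h != 0 -> le h g ->
  is_val le (D (mo h)) ph -> is_val le (D (mo g)) pg -> le ph pg.
Proof.
move=> g0 h0 hg Hh Hg.
have [E|ne] := eqVneq h g.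
  by subst; rewrite (is_val_uniq HG Hh Hg); apply: (le_refl HG).
have hlt : lt h g by split => //; apply/eqP.
have := MON h0 g0 hlt Hh; case: Hg => Hg _ => /(_ _ Hg).
exact: lt_le.
Qed.

Variable b : G -> k.
Hypothesis hb : hahn b.
Hypothesis Hai : asymptotic_integration le D.

Definition rr s := hadd b (hopp (D s)).
Definition acc s g := forall p, is_val le (D (mo g)) p -> val_gt le (rr s) p.
Definition PP h c := exists s, no_const_term le s /\ acc s h /\ s h = c.
Definition sstar : G -> k := fun h =>
  if h == 0 then 0 else
  match pselect (exists c, PP h c) with
  | left e => projT1 (cid e)
  | right _ => 0 end.

Lemma acc_down s g h : g != 0 -> h != 0 -> le h g -> acc s g -> acc s h.
Proof.
move=> g0 h0 hg Ha ph Hph.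
have [pg Hpg] := psi_ex g0.
apply: vgt_le (Ha _ Hpg).
exact: (psi_le g0 h0 hg Hph Hpg).
Qed.

Lemma C1 s s' g h : no_const_term le s -> no_const_term le s' -> g != 0 ->
  acc s g -> acc s' g -> le h g -> s h = s' h.
Proof.
move=> [hs s0] [hs' s0'] g0 As As' hg; apply: contrapT => neq.
pose x := hadd s (hopp s').
have hx : hahn x by exact (hahn_add HG hs (hahn_opp hs')).
have xn : x <> z0.
  move=> /(congr1 (fun F => F h)); rewrite /x /hadd /hopp /hzero => /eqP.
  by rewrite subr_eq0 => /eqP.
have [g1 [xg1 Hx1]] := exists_val hx xn.
have g10 : g1 != 0 by apply/eqP => E; apply: xg1; rewrite E /x /hadd /hopp s0 s0' subrr.
have [pg Hpg] := psi_ex g0.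
have [pg1 Hpg1] := psi_ex g10.
have g1g : le g1 g.
  apply: (le_trans HG _ hg); apply: Hx1.
  by rewrite /x /hadd /hopp => /eqP; rewrite subr_eq0 => /eqP.
have HDx := GEN hx (conj xg1 Hx1) g10 Hpg1.
have EDx : D x = hadd (rr s') (hopp (rr s)).
  rewrite /x Dsub //; apply: funext => y; rewrite /rr /hadd /hopp.
  ring.
have : val_gt le (D x) pg by rewrite EDx; apply: vgt_add; [apply: As' | apply: vgt_opp; apply: As].
case: HDx => Dx1 _ => /(_ _ Dx1) => lt1.
exact (lt_not_le HG lt1 (psi_le g0 g10 g1g Hpg1 Hpg)).
Qed.

Lemma sstar0 : sstar 0 = 0.
Proof. by rewrite /sstar eqxx. Qed.

Lemma sstar_eq s g h : no_const_term le s -> g != 0 -> acc s g -> le h g -> sstar h = s h.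
Proof.
move=> Ss g0 As hg; rewrite /sstar; case: eqP => [->|/eqP h0].
  by case: Ss => _ ->.
have Ash := acc_down g0 h0 hg As.
case: pselect => [e|ne]; last by exfalso; apply: ne; exists (s h); exists s.
move: (projT2 (cid e)); set c := projT1 (cid e) => -[s' [Ss' [As' Ec]]]; rewrite -Ec.
exact: (C1 Ss' Ss h0 As' Ash (le_refl HG h)).
Qed.

Lemma sstar_L h : sstar h <> 0 -> h != 0 /\ exists s, no_const_term le s /\ acc s h.
Proof.
rewrite /sstar; case: eqP => // /eqP h0; case: pselect => // e _; split => //.
by case: e => c [s [Ss [As _]]]; exists s.
Qed.

Lemma hahn_sstar : hahn sstar.
Proof.
move=> B Bs [g Bg].
have [g0 [s [[hs s0] As]]] := sstar_L (Bs _ Bg).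
pose B' := B `&` [set y | le y g].
have B's : B' `<=` supp s.
  move=> y [By yg]; rewrite /supp /= -(sstar_eq (conj hs s0) g0 As yg).
  exact: Bs.
have [m [Bm mg] Hm] := hs B' B's (ex_intro _ g (conj Bg (le_refl HG g))).
exists m => // y By.
case: (le_total HG y g) => yg; first by apply: Hm.
exact: (le_trans HG mg yg).
Qed.

Lemma nct_sstar : no_const_term le sstar.
Proof. by split; [exact: hahn_sstar | exact: sstar0]. Qed.

Lemma near s g p : no_const_term le s -> g != 0 -> acc s g ->
  is_val le (D (mo g)) p -> val_gt le (rr sstar) p.
Proof.
move=> Ss g0 As Hp.
case: (Ss) => hs s0.
pose x := hadd sstar (hopp s).
have hx : hahn x by exact (hahn_add HG hahn_sstar (hahn_opp hs)).
have Er : rr sstar = hadd (rr s) (hopp (D x)).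
  rewrite /x Dsub //; last exact: hahn_sstar.
  apply: funext => y; rewrite /rr /hadd /hopp.
  ring.
rewrite Er; apply: vgt_add; first exact: As.
apply: vgt_opp.
have [xz|xn] := pselect (x = z0); first by rewrite xz D0; apply: vgt_z0.
have [g1 [xg1 Hx1]] := exists_val hx xn.
have g10 : g1 != 0.
  by apply/eqP => E; apply: xg1; rewrite E /x /hadd /hopp s0 sstar0 subrr.
have gg1 : lt g g1.
  apply: (not_le HG) => g1g; apply: xg1.
  by rewrite /x /hadd /hopp (sstar_eq Ss g0 As g1g) subrr.
have [pg1 Hpg1] := psi_ex g10.
have HDx := GEN hx (conj xg1 Hx1) g10 Hpg1.
apply: (vgt_of_val HDx).
case: Hpg1 => D1 _.
exact: (MON g0 g10 gg1 Hp D1).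
Qed.

Lemma Dsstar : D sstar = b.
Proof.
have rz : rr sstar = z0.
  apply: contrapT => rn.
  have hss := hahn_sstar.
  have hr : hahn (rr sstar) by exact (hahn_add HG hb (hahn_opp (Dhahn hss))).
  have [gam Hgam] := exists_val hr rn.
  have [a ha Ha] := Hai hr rn.
  have Ha1 := Ha gam Hgam.
  pose a' := hadd a (hopp (hconst (a 0))).
  have hcst : hahn (hconst (a 0)) by apply: (hahn_hconst HG).
  have ha' : hahn a' by exact (hahn_add HG ha (hahn_opp hcst)).
  have Da' : D a' = D a.
    rewrite /a' Dsub // Dconst; apply: funext => y.
    by rewrite /hadd /hopp /hzero oppr0 addr0.
  have Dag : is_val le (D a) gam.
    have -> : D a = hadd (hopp (hadd (rr sstar) (hopp (D a)))) (rr sstar).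
      by apply: funext => y; rewrite /hadd /hopp; ring.
    by apply: isval_add => //; apply: vgt_opp.
  have a'n : a' <> z0.
    move=> az; case: Dag => Dg _; apply: Dg.
    by rewrite -Da' az D0.
  have [g1 [ag1 Hag1]] := exists_val ha' a'n.
  have g10 : g1 != 0.
    by apply/eqP => E; apply: ag1; rewrite E /a' /hadd /hopp /hconst eqxx subrr.
  have [pg1 Hpg1] := psi_ex g10.
  have HDa := GEN ha' (conj ag1 Hag1) g10 Hpg1.
  rewrite Da' in HDa.
  have Epg : pg1 = gam by exact (is_val_uniq HG HDa Dag).
  pose s' := hadd sstar a'.
  have Ss' : no_const_term le s'.
    split; first exact (hahn_add HG hss ha').
    by rewrite /s' /hadd sstar0 /a' /hadd /hopp /hconst eqxx subrr addr0.
  have As' : acc s' g1.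
    move=> p Hp; rewrite (is_val_uniq HG Hp Hpg1) Epg.
    have -> : rr s' = hadd (rr sstar) (hopp (D a)).
      rewrite /rr /s' Dadd // Da'; apply: funext => y.
      rewrite /hadd /hopp; ring.
    exact: Ha1.
  have := near Ss' g10 As' Hpg1; rewrite Epg.
  case: Hgam => rg _ => /(_ _ rg).
  exact: lt_irr.
apply: funext => y; have := congr1 (fun F => F y) rz.
by rewrite /rr /hadd /hopp /hzero => /eqP; rewrite subr_eq0 => /eqP.
Qed.

Lemma uniq_sol s1 s2 : no_const_term le s1 -> no_const_term le s2 ->
  D s1 = D s2 -> s1 = s2.
Proof.
move=> [h1 z1] [h2 z2] E.
pose x := hadd s1 (hopp s2).
have hx : hahn x by exact (hahn_add HG h1 (hahn_opp h2)).
have Dx : D x = z0.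
  rewrite /x Dsub // E; apply: funext => y.
  by rewrite /hadd /hopp /hzero subrr.
have [c Ec] := proj1 (Hcst hx) Dx.
have c0 : c = 0.
  have := congr1 (fun F => F 0) Ec.
  by rewrite /x /hadd /hopp /hconst eqxx z1 z2 subrr.
apply: funext => y; have := congr1 (fun F => F y) Ec.
rewrite /x /hadd /hopp /hconst c0 => /eqP; rewrite if_same subr_eq0.
by move/eqP.
Qed.

End Deriv.

Theorem mainTheorem7 (k : fieldType) (G : zmodType) (le : rel G)
  (HG : ordered_abelian_group le) (D : (G -> k) -> (G -> k)) :
  derivation le D ->
  constants_are_k le D ->
  differential_valuation le D ->
  asymptotic_integration le D ->
  forall b : G -> k, hahn le b ->
    exists! s : G -> k, no_const_term le s /\ D s = b.
Proof.
move=> Hder Hcst Hdv Hai b hb.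
exists (sstar le D b); split.
  split; first exact: nct_sstar.
  exact: Dsstar.
move=> s' [Ss' Ds'].
apply: (uniq_sol HG Hder Hcst (nct_sstar HG Hder Hcst Hdv b) Ss').
by rewrite Ds' (Dsstar HG Hder Hcst Hdv hb Hai).
Qed.
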